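(* Let $\alpha_1,\dots,\alpha_n\in\Gamma$ be linearly independent over $\mathbb{R}$. Let $A$ be the $n\times n$ matrix of $1$-forms defined in the context, fix $i\neq j$ in $\{1,\dots,n\}$, and fix an integer $p\ge3$. Suppose that either $\operatorname{len}(\alpha_j-\alpha_i)\ge p$, or both of the following hold: (Q) for all $k\notin\{i,j\}$, $$\langle\alpha_j,\alpha_i\rangle\langle\alpha_j-\alpha_k,\alpha_k-\alpha_i\rangle=\langle\alpha_j,\alpha_k\rangle\langle\alpha_k,\alpha_i\rangle;$$ (V) for every ordered pair $(\beta,\gamma)$ of nonzero elements of $\Gamma$ with $\beta+\gamma=\alpha_j-\alpha_i$ that is not of the form $(\alpha_j-\alpha_k,\alpha_k-\alpha_i)$ or $(\alpha_k-\alpha_i,\alpha_j-\alpha_k)$ for some $k\notin\{i,j\}$, one has $\langle\beta,\gamma\rangle f^\beta f^\gamma\in(\mathbf{s})^p$. Then the $(j,i)$ entry of the curvature matrix $F=dA+A\wedge A$ lies in $(\mathbf{s})^p$, i.e. it vanishes modulo terms of order at least $p$ in $\mathbf{s}$.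
   Context: Let $\Gamma\cong\mathbb{Z}^n$ be a lattice with basis $[S_1],\dots,[S_n]$, and let $\langle-,-\rangle:\Gamma\times\Gamma\to\mathbb{Z}$ be a skew-symmetric bilinear form. For $\alpha=\sum_i a_i[S_i]$ set $\operatorname{len}(\alpha)=\sum_i|a_i|$. Let $U\subset\operatorname{Hom}(\Gamma,\mathbb{C})$ be a connected open set; for $\alpha\in\Gamma$, $Z(\alpha)$ is a linear holomorphic function on $U$. Let $\mathbf{s}=(s_1,\dots,s_n)$ be formal variables, and let $R$ be the ring of formal power series in $\mathbf{s}$ with coefficients holomorphic on $U$. Differential forms with coefficients in $R$ are power series in $\mathbf{s}$ whose coefficients are holomorphic forms, and $d$ acts coefficientwise. $(\mathbf{s})^p$ denotes the series (or forms) all of whose monomials have total degree at least $p$. Let $\{f^\alpha\}_{\alpha\in\Gamma\setminus\{0\}}\subset R$ satisfy: (i) $f^\alpha\in(\mathbf{s})^{\operatorname{len}(\alpha)}$; (ii) if $f^\alpha\neq0$ then $Z(\alpha)$ is nowhere zero on $U$; (iii) the Joyce PDE $$df^\alpha=-\sum_{\beta+\gamma=\alpha,\ \beta,\gamma\neq0}(-1)^{\langle\beta,\gamma\rangle}\langle\beta,\gamma\rangle f^\beta f^\gamma\, d\log Z(\beta)$$ holds. Here the sum is over ordered pairs and is $\mathbf{s}$-adically convergent by (i). Given $\alpha_1,\dots,\alpha_n$, define the $n\times n$ matrix of $1$-forms $A$ by $A_{kk}=0$ and, for $k\neq l$, $$A_{kl}=(-1)^{\langle\alpha_k,\alpha_l\rangle}\langle\alpha_k,\alpha_l\rangle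 f^{\alpha_k-\alpha_l}\,d\log Z(\alpha_k-\alpha_l),$$ with $A_{kl}=0$ when $f^{\alpha_k-\alpha_l}=0$. *)

(* Defs.v *)
From HB Require Import structures.
From mathcomp Require Import all_boot all_order all_algebra.
Set Implicit Arguments. Unset Strict Implicit. Unset Printing Implicit Defensive.
Import GRing.Theory Num.Theory.
Local Open Scope ring_scope.

(* Monomials s^m in the formal variables s_1..s_n, and their total degree. *)
Definition mono (n : nat) := 'I_n -> nat.
Definition mdeg (n : nat) (m : mono n) : nat := (\sum_(r < n) m r)%N.

(* Formal power series in s with coefficients in the ring H
   (H = holomorphic functions on U): coefficient functions. *)
Definition PS (H : Type) (n : nat) := mono n -> H.

Definition mulPS (H : comPzRingType) (n : nat) (f g : PS H n) : PS H n :=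
  fun m => \sum_(a : {ffun 'I_n -> 'I_(mdeg m).+1} | [forall r, (a r <= m r)%N])
             f (fun r => nat_of_ord (a r)) * g (fun r => (m r - a r)%N).

Definition inSp (H : nmodType) (n : nat) (p : nat) (f : PS H n) : Prop :=
  forall m : mono n, (mdeg m < p)%N -> f m = 0.

(* Lattice Gamma = Z^n (row vectors in the basis [S_1..S_n]); skew form given by
   its Gram matrix Om. *)
Definition pairing (n : nat) (Om : 'M[int]_n) (b c : 'rV[int]_n) : int :=
  (b *m Om *m c^T) 0 0.
Definition len (n : nat) (a : 'rV[int]_n) : nat := (\sum_(r < n) `|a ord0 r|)%N.

Definition sgn (H : pzRingType) (x : int) : H := (-1) ^+ `|x|%N.
Definition cf (H : pzRingType) (n : nat) (Om : 'M[int]_n) (b c : 'rV[int]_n) : H :=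
  sgn H (pairing Om b c) * (pairing Om b c)%:~R.

(* Central charge Z(b) = sum_r b_r z_r, z_r = Z([S_r]) the coordinate functions. *)
Definition Zc (H : pzRingType) (n : nat) (z : 'I_n -> H) (b : 'rV[int]_n) : H :=
  \sum_(r < n) (b ord0 r)%:~R * z r.
(* dz_r-coefficient of d log Z(b) = Z(b)^{-1} dZ(b). *)
Definition dlogZ (H : comUnitRingType) (n : nat) (z : 'I_n -> H) (b : 'rV[int]_n)
  (r : 'I_n) : H := (Zc z b)^-1 * (b ord0 r)%:~R.

Definition boxvec (n D : nat) (x : {ffun 'I_n -> 'I_(2 * D).+1}) : 'rV[int]_n :=
  \row_r ((x r)%:Z - D%:Z).

(* dz_r-coefficient of the right-hand side of the Joyce PDE, coefficient of s^m.
   Thanks to hypothesis (i), only pairs with len b, len c <= deg m contribute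
   to the coefficient of s^m, so the s-adically convergent sum equals this
   finite sum over the box |b_r| <= deg m. *)
Definition joyce_rhs (H : comUnitRingType) (n : nat) (Om : 'M[int]_n)
  (z : 'I_n -> H) (f : 'rV[int]_n -> PS H n) (a : 'rV[int]_n) (r : 'I_n) : PS H n :=
  fun m => - \sum_(x : {ffun 'I_n -> 'I_(2 * mdeg m).+1})
     (let b := boxvec x in let c := a - b in
      if (b != 0) && (c != 0)
      then cf H Om b c * mulPS (f b) (f c) m * dlogZ z b r else 0).

Definition dPS (H : Type) (n : nat) (D : 'I_n -> H -> H) (r : 'I_n) (g : PS H n)
  : PS H n := fun m => D r (g m).

(* dz_r-coefficient of the 1-form A_{kl}. *)
Definition Amat (H : comUnitRingType) (n : nat) (Om : 'M[int]_n) (z : 'I_n -> H)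
  (f : 'rV[int]_n -> PS H n) (alpha : 'I_n -> 'rV[int]_n) (k l r : 'I_n) : PS H n :=
  fun m => if k == l then 0
           else cf H Om (alpha k) (alpha l) * f (alpha k - alpha l) m
                * dlogZ z (alpha k - alpha l) r.

(* dz_r ^ dz_t - coefficient of F_{jl} = (dA + A ^ A)_{jl}. *)
Definition curv (H : comUnitRingType) (n : nat) (Om : 'M[int]_n) (D : 'I_n -> H -> H)
  (z : 'I_n -> H) (f : 'rV[int]_n -> PS H n) (alpha : 'I_n -> 'rV[int]_n)
  (j l r t : 'I_n) : PS H n :=
  let A := Amat Om z f alpha in
  fun m => dPS D r (A j l t) m - dPS D t (A j l r) m
           + \sum_(k < n) (mulPS (A j k r) (A k l t) m - mulPS (A j k t) (A k l r) m).

(* Main.v *)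
Require Import Defs.
From HB Require Import structures.
From mathcomp Require Import all_boot all_order all_algebra zify ring.
From Stdlib Require Import FunctionalExtensionality Classical.
Import GRing.Theory Num.Theory.
Local Open Scope ring_scope.


Lemma D0 {H : comUnitRingType} {D : H -> H} :
  (forall x y, D (x + y) = D x + D y) -> D 0 = 0.
Proof. move=> hA. apply: (addrI (D 0)); by rewrite -hA !addr0. Qed.

Lemma DN {H : comUnitRingType} {D : H -> H} :
  (forall x y, D (x + y) = D x + D y) -> forall x, D (- x) = - D x.
Proof. move=> hA x; apply: (addrI (D x)); by rewrite -hA !subrr D0. Qed.

Lemma D1 {H : comUnitRingType} {D : H -> H} :
  (forall x y, D (x + y) = D x + D y) ->
  (forall x y, D (x * y) = D x * y + x * D y) -> D 1 = 0.
Proof. move=> hA hM. apply: (addrI (D 1)); have := hM 1 1; rewrite !mulr1 !mul1r addr0.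
by move=> <-. Qed.

Lemma Dnat {H : comUnitRingType} {D : H -> H} :
  (forall x y, D (x + y) = D x + D y) ->
  (forall x y, D (x * y) = D x * y + x * D y) -> forall k : nat, D k%:R = 0.
Proof. move=> hA hM; elim=> [|k IH]; first exact: D0.
by rewrite -addn1 natrD hA IH D1 // addr0. Qed.

Lemma Dint {H : comUnitRingType} {D : H -> H} :
  (forall x y, D (x + y) = D x + D y) ->
  (forall x y, D (x * y) = D x * y + x * D y) -> forall k : int, D k%:~R = 0.
Proof. move=> hA hM [k|k]; first by rewrite Dnat.
by rewrite NegzE mulrNz DN // Dnat // oppr0. Qed.

Lemma Dsign {H : comUnitRingType} {D : H -> H} :
  (forall x y, D (x + y) = D x + D y) ->
  (forall x y, D (x * y) = D x * y + x * D y) -> forall k : nat, D ((-1) ^+ k) = 0.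
Proof. move=> hA hM; elim=> [|k IH]; first by rewrite expr0 D1.
by rewrite exprS hM IH mulr0 DN // D1 // oppr0 mul0r addr0. Qed.

Lemma DcM {H : comUnitRingType} {D : H -> H} :
  (forall x y, D (x * y) = D x * y + x * D y) ->
  forall c x, D c = 0 -> D (c * x) = c * D x.
Proof. by move=> hM c x h; rewrite hM h mul0r add0r. Qed.

Lemma Dsum {H : comUnitRingType} {D : H -> H} :
  (forall x y, D (x + y) = D x + D y) ->
  forall (I : finType) (F : I -> H), D (\sum_i F i) = \sum_i D (F i).
Proof. move=> hA I F. exact: (@big_morph _ _ D 0 +%R 0 +%R hA (D0 hA)). Qed.

Lemma DinvU {H : comUnitRingType} {D : H -> H} :
  (forall x y, D (x + y) = D x + D y) ->
  (forall x y, D (x * y) = D x * y + x * D y) ->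
  forall G, G \is a GRing.unit -> D (G^-1) = - (G^-1 * G^-1 * D G).
Proof. move=> hA hM G hG.
have := hM G G^-1; rewrite mulrV // D1 // => /esym/eqP; rewrite addrC addr_eq0 => /eqP h.
have -> : D G^-1 = G^-1 * (G * D G^-1) by rewrite mulrA mulVr ?mul1r.
by rewrite h mulrN; congr (- _); rewrite [D G * _]mulrC mulrA.
Qed.

Lemma ZcD (H : pzRingType) n (z : 'I_n -> H) b c : Zc z (b + c) = Zc z b + Zc z c.
Proof. rewrite /Zc -big_split /=; apply: eq_bigr => r _; by rewrite mxE intrD mulrDl. Qed.

Lemma ZcN (H : pzRingType) n (z : 'I_n -> H) b : Zc z (- b) = - Zc z b.
Proof. rewrite /Zc -sumrN; apply: eq_bigr => r _; by rewrite mxE intrN mulNr. Qed.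

Lemma DZc (H : comUnitRingType) n (D : 'I_n -> H -> H) (z : 'I_n -> H) :
  (forall r x y, D r (x + y) = D r x + D r y) ->
  (forall r x y, D r (x * y) = D r x * y + x * D r y) ->
  (forall r t, D r (z t) = (r == t)%:R) ->
  forall b r, D r (Zc z b) = (b 0 r)%:~R.
Proof. move=> hA hM hz b r. rewrite /Zc Dsum //.
rewrite (bigD1 r) //= big1 ?addr0.
  by rewrite DcM ?Dint // hz eqxx mulr1.
by move=> k hk; rewrite DcM ?Dint // hz eq_sym (negPf hk) mulr0.
Qed.

Lemma Zc_nz (H : idomainType) n (D : 'I_n -> H -> H) (z : 'I_n -> H) :
  [pchar H] =i pred0 ->
  (forall r x y, D r (x + y) = D r x + D r y) ->
  (forall r x y, D r (x * y) = D r x * y + x * D r y) ->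
  (forall r t, D r (z t) = (r == t)%:R) ->
  forall b, b != 0 -> Zc z b != 0.
Proof. move=> hc hA hM hz b hb. 
have [r hr] : exists r, b 0 r != 0.
  case: (classic (exists r, b 0 r != 0)) => // hn; case/negP: hb; apply/eqP/rowP => r.
  rewrite mxE; case: (eqVneq (b 0 r) 0) => // h; case: hn; by exists r.
apply/negP => /eqP h0; have := @DZc _ _ D z hA hM hz b r; rewrite h0 (D0 (hA r)) => /esym/eqP.
have hch := (pcharf0P H).1 hc.
move: hr; case: (b 0 r) => [m|m] hr.
  by rewrite hch => /eqP hm; rewrite hm eqxx in hr.
by rewrite NegzE mulrNz oppr_eq0 hch.
Qed.


Lemma pairingDl n (Om : 'M[int]_n) b b' c :
  pairing Om (b + b') c = pairing Om b c + pairing Om b' c.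
Proof. by rewrite /pairing !mulmxDl mxE. Qed.

Lemma pairingDr n (Om : 'M[int]_n) b c c' :
  pairing Om b (c + c') = pairing Om b c + pairing Om b c'.
Proof. by rewrite /pairing linearD /= mulmxDr mxE. Qed.

Lemma pairingNl n (Om : 'M[int]_n) b c : pairing Om (- b) c = - pairing Om b c.
Proof. by rewrite /pairing !mulNmx mxE. Qed.

Lemma pairingNr n (Om : 'M[int]_n) b c : pairing Om b (- c) = - pairing Om b c.
Proof. by rewrite /pairing linearN /= mulmxN mxE. Qed.

Lemma pairingBl n (Om : 'M[int]_n) b b' c :
  pairing Om (b - b') c = pairing Om b c - pairing Om b' c.
Proof. by rewrite pairingDl pairingNl. Qed.

Lemma pairingBr n (Om : 'M[int]_n) b c c' :
  pairing Om b (c - c') = pairing Om b c - pairing Om b c'.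
Proof. by rewrite pairingDr pairingNr. Qed.

Lemma tr11 (A : 'M[int]_1) : A 0 0 = A^T 0 0.
Proof. by rewrite mxE. Qed.

Lemma pairing_skew {n} {Om : 'M[int]_n} : Om^T = - Om ->
  forall b c, pairing Om c b = - pairing Om b c.
Proof. move=> hO b c. rewrite /pairing tr11 !trmx_mul trmxK hO.
by rewrite mulNmx mulmxN mulmxA mxE. Qed.

Lemma pairing_self {n} {Om : 'M[int]_n} : Om^T = - Om -> forall b, pairing Om b b = 0.
Proof. move=> hO b. have := pairing_skew hO b b. move=> h. lia. Qed.

Lemma sgnD (H : pzRingType) (x y : int) : sgn H (x + y) = sgn H x * sgn H y.
Proof. rewrite /sgn -exprD -signr_odd -[in RHS]signr_odd.
have -> : odd (absz (x + y)%R) = odd (absz x + absz y) by lia. by []. Qed.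

Lemma sgnN (H : pzRingType) (x : int) : sgn H (- x) = sgn H x.
Proof. by rewrite /sgn abszN. Qed.

Lemma cf_swap (H : pzRingType) {n} {Om : 'M[int]_n} : Om^T = - Om ->
  forall b c, cf H Om c b = - cf H Om b c.
Proof. move=> hO b c. rewrite /cf (pairing_skew hO b c) sgnN mulrNz mulrN. by []. Qed.


Lemma mdeg_ge {n} (m : mono n) r : (m r <= mdeg m)%N.
Proof. by rewrite /mdeg (bigD1 r) //= leq_addr. Qed.

Lemma mdeg_split {n} {m a : mono n} : (forall r, a r <= m r)%N ->
  (mdeg a + mdeg (fun r => m r - a r) = mdeg m)%N.
Proof. move=> h; rewrite /mdeg -big_split /=; apply: eq_bigr => r _; by rewrite subnKC. Qed.

Lemma mulPS_scale (H : comPzRingType) n (F G g h : PS H n) a b c d m :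
  (forall m', F m' = a * g m' * b) -> (forall m', G m' = c * h m' * d) ->
  mulPS F G m = (a * b * c * d) * mulPS g h m.
Proof. move=> hF hG; rewrite /mulPS mulr_sumr; apply: eq_bigr => x _.
rewrite hF hG; ring. Qed.

Lemma mulPS_0l (H : comPzRingType) n (F G : PS H n) m :
  (forall m', F m' = 0) -> mulPS F G m = 0.
Proof. move=> hF; rewrite /mulPS big1 // => x _; by rewrite hF mul0r. Qed.

Lemma mulPS_0r (H : comPzRingType) n (F G : PS H n) m :
  (forall m', G m' = 0) -> mulPS F G m = 0.
Proof. move=> hF; rewrite /mulPS big1 // => x _; by rewrite hF mulr0. Qed.

Lemma mulPS_inSp (H : comPzRingType) n (g h : PS H n) a b :
  inSp a g -> inSp b h -> inSp (a + b) (mulPS g h).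
Proof. move=> hg hh m hm; rewrite /mulPS big1 // => x /forallP hx.
have hx' : forall r, (x r <= m r)%N by move=> r; exact: hx.
have hs : (mdeg (fun r : 'I_n => nat_of_ord (x r)) + mdeg (fun r : 'I_n => (m r - x r)%N) = mdeg m)%N.
  exact: mdeg_split.
move: hs; set u := mdeg (fun r : 'I_n => nat_of_ord (x r)); set v := mdeg _ => hs.
case: (ltnP u a) => h1; first by rewrite hg // mul0r.
rewrite hh ?mulr0 //. change (v < b)%N. lia.
Qed.

Lemma mulPS_C (H : comPzRingType) n (g h : PS H n) m :
  mulPS g h m = mulPS h g m.
Proof.
rewrite /mulPS.
pose inv (x : {ffun 'I_n -> 'I_(mdeg m).+1}) : {ffun 'I_n -> 'I_(mdeg m).+1} :=
  [ffun r => inord (m r - x r)].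
have invE : forall x r, nat_of_ord (inv x r) = (m r - x r)%N.
  by move=> x r; rewrite ffunE inordK // ltnS (leq_trans (leq_subr _ _)) // mdeg_ge.
rewrite (reindex_onto inv inv) /=; last first.
  move=> x /forallP hx; apply/ffunP => r; apply: val_inj; rewrite /= !invE.
  have := hx r; lia.
apply: eq_big => [x|x /andP[_ hx2]].
  apply/idP/idP.
    case/andP => _ /eqP <-; apply/forallP => r; rewrite !invE; lia.
  move=> /forallP hx; apply/andP; split.
    apply/forallP => r; rewrite invE; lia.
  apply/eqP/ffunP => r; apply: val_inj; rewrite /= !invE; have := hx r; lia.
have hx : forall r, (x r <= m r)%N.
  move=> r; have := congr1 (fun y : {ffun 'I_n -> 'I_(mdeg m).+1} => nat_of_ord (y r)) (eqP hx2); rewrite /= !invE; lia.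
rewrite mulrC; congr (_ * _); [congr h|congr g]; apply: functional_extensionality => r;
  rewrite invE //; have := hx r; lia.
Qed.

Lemma mulPS_nzl (H : comPzRingType) n (g h : PS H n) m :
  mulPS g h m != 0 -> exists m', g m' != 0.
Proof. move=> hm. case: (classic (exists m', g m' != 0)) => // hn.
move: hm; rewrite mulPS_0l ?eqxx // => m'.
case: (eqVneq (g m') 0) => // hz; case: hn; by exists m'. Qed.

Lemma mulPS_nzr (H : comPzRingType) n (g h : PS H n) m :
  mulPS g h m != 0 -> exists m', h m' != 0.
Proof. rewrite mulPS_C; exact: mulPS_nzl. Qed.


Lemma sum_ind n (v : 'I_n -> 'rV[int]_n) a :
  \sum_k ((k == a)%:R : int) *: v k = v a.
Proof. rewrite (bigD1 a) //= eqxx scale1r big1 ?addr0 // => k /negPf ->.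
by rewrite scale0r. Qed.

Lemma indep {n} {alpha : 'I_n -> 'rV[int]_n} :
  row_free (\matrix_(k, r) ((alpha k ord0 r)%:~R : rat)) ->
  forall c : 'rV[int]_n, \sum_k c 0 k *: alpha k = 0 -> c = 0.
Proof.
move=> hf c hc.
pose c' : 'rV[rat]_n := \row_k ((c 0 k)%:~R).
have : c' *m (\matrix_(k, r) ((alpha k ord0 r)%:~R : rat)) = 0.
  apply/rowP => r; rewrite !mxE.
  have := congr1 (fun v : 'rV[int]_n => ((v 0 r)%:~R : rat)) hc.
  rewrite /= mxE summxE rmorph_sum /= mulr0z => h0; apply: (etrans _ h0).
  apply: eq_bigr => k _; rewrite !mxE rmorphM /=. by [].
move/eqP; rewrite mulmx_free_eq0 // => /eqP hc0.
apply/rowP => k; have := congr1 (fun v : 'rV[rat]_n => v 0 k) hc0.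
rewrite /= !mxE => /eqP; rewrite intr_eq0 => /eqP ->. by [].
Qed.

Lemma indep4 {n} {alpha : 'I_n -> 'rV[int]_n} :
  row_free (\matrix_(k, r) ((alpha k ord0 r)%:~R : rat)) ->
  forall a b c d, a != c -> a != d -> alpha a + alpha b != alpha c + alpha d.
Proof.
move=> hf a b c d hac had; apply/negP => /eqP h.
pose w : 'rV[int]_n := \row_k ((k == a)%:R + (k == b)%:R - (k == c)%:R - (k == d)%:R).
have : w = 0.
  apply: (indep hf).
  under eq_bigr => k _ do rewrite mxE !scalerDl !scaleNr.
  rewrite !big_split /= !sumrN !sum_ind h. by rewrite addrAC addrK subrr.
move/rowP => /(_ a); rewrite !mxE eqxx (negPf hac) (negPf had).
case: (a == b) => /=; lia.
Qed.


Lemma boxvec_inj n D : injective (@boxvec n D).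
Proof. move=> x y /rowP h; apply/ffunP => r; apply: val_inj; have := h r.
rewrite !mxE => /eqP; rewrite (inj_eq (addIr _)) => /eqP[]; exact. Qed.

Lemma len_ge {n} (b : 'rV[int]_n) r : (absz (b ord0 r) <= len b)%N.
Proof. by rewrite /len (bigD1 r) //= leq_addr. Qed.

Lemma len_tri n (b c : 'rV[int]_n) : (len (b + c) <= len b + len c)%N.
Proof. rewrite /len -big_split /=; apply: leq_sum => r _; rewrite mxE; move: (b ord0 r) (c ord0 r) => x y; lia. Qed.

Lemma box_surj n D (b : 'rV[int]_n) : (len b <= D)%N -> exists x, @boxvec n D x = b.
Proof. move=> hl.
pose e (r : 'I_n) : int := b ord0 r + Posz D.
exists [ffun r => inord (absz (e r))].
apply/rowP => r; rewrite !mxE ffunE.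
have := len_ge b r => hr.
rewrite inordK; last by rewrite /e; move: (b ord0 r) hr => x hr; lia.
rewrite /e ord1; move: (b ord0 r) hr => x hr; lia.
Qed.


Lemma cfQ (H : comPzRingType) n (Om : 'M[int]_n) : Om^T = - Om ->
  forall a b c : 'rV[int]_n,
  pairing Om a c * pairing Om (a - b) (b - c) = pairing Om a b * pairing Om b c ->
  cf H Om a b * cf H Om b c = cf H Om a c * cf H Om (a - b) (b - c).
Proof. move=> hO a b c hQ.
have hv : pairing Om (a - b) (b - c) = pairing Om a b - pairing Om a c + pairing Om b c.
  rewrite pairingBl !pairingBr (pairing_self hO). ring.
rewrite /cf.
move: hQ hv; set x := pairing Om a b; set y := pairing Om b c; set u := pairing Om a c;
  set v := pairing Om (a - b) (b - c) => hQ hv.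
have -> : sgn H x * x%:~R * (sgn H y * y%:~R) = sgn H (x + y) * (x * y)%:~R.
  rewrite sgnD intrM. ring.
have -> : sgn H u * u%:~R * (sgn H v * v%:~R) = sgn H (u + v) * (u * v)%:~R.
  rewrite sgnD intrM. ring.
by rewrite hQ hv; congr (sgn H _ * _); ring.
Qed.

Lemma diff_nz n (alpha : 'I_n -> 'rV[int]_n) :
  row_free (\matrix_(k, r) ((alpha k ord0 r)%:~R : rat)) ->
  forall a b, a != b -> alpha a - alpha b != 0.
Proof. move=> hf a b hab; apply/negP => /eqP h.
have := indep4 hf a b b b hab hab; rewrite (_ : alpha a = alpha b) ?eqxx //.
by apply/eqP; rewrite -subr_eq0 h. Qed.

Lemma cross_nz n (alpha : 'I_n -> 'rV[int]_n) :
  row_free (\matrix_(k, r) ((alpha k ord0 r)%:~R : rat)) ->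
  forall i j k k', j != k -> j != k' -> alpha j - alpha k != alpha k' - alpha i.
Proof. move=> hf i j k k' h1 h2; apply/negP => /eqP h.
have := indep4 hf j i k k' h1 h2; rewrite (_ : alpha j + alpha i = alpha k + alpha k') ?eqxx //.
apply/eqP; rewrite -subr_eq0; apply/eqP.
have -> : alpha j + alpha i - (alpha k + alpha k') = (alpha j - alpha k) - (alpha k' - alpha i) by
  rewrite opprD !opprB; rewrite addrACA addrC; congr (_ + _); rewrite addrC.
by rewrite h subrr. Qed.

Lemma Dcf {H : comUnitRingType} {D : H -> H} :
  (forall x y, D (x + y) = D x + D y) ->
  (forall x y, D (x * y) = D x * y + x * D y) ->
  forall n (Om : 'M[int]_n) b c, D (cf H Om b c) = 0.
Proof. move=> hA hM n Om b c; rewrite /cf /sgn DcM ?Dint ?mulr0 //; exact: Dsign. Qed.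


Theorem lemma3p6 (H : idomainType) (n : nat) (Om : 'M[int]_n)
  (D : 'I_n -> H -> H) (z : 'I_n -> H) (f : 'rV[int]_n -> PS H n)
  (alpha : 'I_n -> 'rV[int]_n) (i j : 'I_n) (p : nat) :
  (* H: holomorphic functions on the connected open U -- an integral domain
     of characteristic 0 *)
  [pchar H] =i pred0 ->
  (* skew-symmetric form *)
  Om^T = - Om ->
  (* D r = d/dz_r : derivations of H, z the coordinate functions *)
  (forall r x y, D r (x + y) = D r x + D r y) ->
  (forall r x y, D r (x * y) = D r x * y + x * D r y) ->
  (forall r t x, D r (D t x) = D t (D r x)) ->
  (forall r t, D r (z t) = (r == t)%:R) ->
  (* (i) *)
  (forall a, a != 0 -> inSp (len a) (f a)) ->
  (* (ii) *)
  (forall a, a != 0 -> (exists m, f a m != 0) -> Zc z a \is a GRing.unit) ->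
  (* (iii) Joyce PDE, componentwise in dz_r and coefficientwise in s *)
  (forall a, a != 0 -> forall r m, D r (f a m) = joyce_rhs Om z f a r m) ->
  (* alpha_1..alpha_n linearly independent *)
  row_free (\matrix_(k, r) ((alpha k ord0 r)%:~R : rat)) ->
  i != j -> (3 <= p)%N ->
  ((p <= len (alpha j - alpha i))%N \/
   ((forall k, k != i -> k != j ->
       pairing Om (alpha j) (alpha i)
         * pairing Om (alpha j - alpha k) (alpha k - alpha i)
       = pairing Om (alpha j) (alpha k) * pairing Om (alpha k) (alpha i)) /\
    (forall b c : 'rV[int]_n, b != 0 -> c != 0 -> b + c = alpha j - alpha i ->
       ~ (exists k, [/\ k != i, k != j &
            (b = alpha j - alpha k /\ c = alpha k - alpha i) \/
            (b = alpha k - alpha i /\ c = alpha j - alpha k)]) ->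
       inSp p (fun m => (pairing Om b c)%:~R * mulPS (f b) (f c) m)))) ->
  forall r t : 'I_n, inSp p (curv Om D z f alpha j i r t).
Proof.
move=> hch hO hA hM hC hz hi hii hiii hind hij hp hcase r t m hm.
set g := alpha j - alpha i.
have hji : j != i by rewrite eq_sym.
have hg : g != 0 by exact: diff_nz.
set C := cf H Om (alpha j) (alpha i).
set G := Zc z g.
set W := G^-1.
have hAji : forall s m', Amat Om z f alpha j i s m' = C * f g m' * (W * (g ord0 s)%:~R).
  by move=> s m'; rewrite /Amat (negPf hji).
have hB : dPS D r (Amat Om z f alpha j i t) m - dPS D t (Amat Om z f alpha j i r) m
   = C * W * ((g ord0 t)%:~R * D r (f g m) - (g ord0 r)%:~R * D t (f g m)).
  rewrite /dPS !hAji.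
  case: (boolP (G \is a GRing.unit)) => hG.
    have e : forall s, C * f g m * (W * (g ord0 s)%:~R) = (C * (g ord0 s)%:~R) * (f g m * W) by move=> s; ring.
    have hc : forall s s', D s (C * (g ord0 s')%:~R) = 0.
      by move=> s s0; rewrite hM (Dcf (hA s) (hM s)) (Dint (hA s) (hM s)) mul0r mulr0 addr0.
    rewrite !e (DcM (hM r)) // (DcM (hM t)) // (hM r) (hM t).
    rewrite /W (DinvU (hA r) (hM r)) // (DinvU (hA t) (hM t)) //.
    rewrite /G !(@DZc _ _ D z hA hM hz).
    ring.
  have hf0 : f g m = 0.
    case: (eqVneq (f g m) 0) => // hne; case/negP: hG; apply: hii => //; by exists m.
  rewrite hf0 !mulr0 !mul0r (D0 (hA r)) (D0 (hA t)). ring.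
pose be k := alpha j - alpha k.
pose de k := alpha k - alpha i.
have hbe0 : forall k, k != j -> be k != 0 by move=> k hk; apply: diff_nz; rewrite // eq_sym.
have hde0 : forall k, k != i -> de k != 0 by move=> k hk; exact: diff_nz.
have hgbe : forall k, g - be k = de k by move=> k; rewrite /g /be /de opprB addrC addrA subrK.
have hgde : forall k, g - de k = be k by move=> k; rewrite /g /be /de opprB addrA subrK.
have hbeinj : forall k k', be k = be k' -> k = k'.
  move=> k k' e; apply/eqP; case: (eqVneq k k') => // hne.
  have := @diff_nz _ _ hind _ _ hne; rewrite (_ : alpha k = alpha k') ?subrr ?eqxx //.
  by apply: oppr_inj; apply: (addrI (alpha j)).
have hdeinj : forall k k', de k = de k' -> k = k'.
  move=> k k' e; apply/eqP; case: (eqVneq k k') => // hne.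
  have := @diff_nz _ _ hind _ _ hne; rewrite (_ : alpha k = alpha k') ?subrr ?eqxx //.
  by apply: (addIr (- alpha i)).
have hcross : forall k k', k != j -> k' != j -> be k != de k'.
  by move=> k k' h1 h2; apply: cross_nz; rewrite // eq_sym.
pose M k := mulPS (f (be k)) (f (de k)) m.
pose P k := mulPS (Amat Om z f alpha j k r) (Amat Om z f alpha k i t) m
          - mulPS (Amat Om z f alpha j k t) (Amat Om z f alpha k i r) m.
have hP0 : forall k, ~~ ((k != i) && (k != j)) -> P k = 0.
  move=> k; rewrite negb_and !negbK => /orP[/eqP->|/eqP->].
    by rewrite /P !mulPS_0r ?subrr // => m'; rewrite /Amat eqxx.
  by rewrite /P !mulPS_0l ?subrr // => m'; rewrite /Amat eqxx.
have hPk : forall k, k != i -> k != j -> P k =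
   cf H Om (alpha j) (alpha k) * cf H Om (alpha k) (alpha i) * M k *
   ((Zc z (be k))^-1 * (Zc z (de k))^-1 *
    ((be k ord0 r)%:~R * (de k ord0 t)%:~R - (be k ord0 t)%:~R * (de k ord0 r)%:~R)).
  move=> k hki hkj.
  have hjk : j != k by rewrite eq_sym.
  have hF : forall s m', Amat Om z f alpha j k s m' = cf H Om (alpha j) (alpha k) * f (be k) m' * dlogZ z (be k) s.
    by move=> s m'; rewrite /Amat (negPf hjk).
  have hG : forall s m', Amat Om z f alpha k i s m' = cf H Om (alpha k) (alpha i) * f (de k) m' * dlogZ z (de k) s.
    by move=> s m'; rewrite /Amat (negPf hki).
  rewrite /P (mulPS_scale _ _ _ _ _ _ _ _ _ _ m (hF r) (hG t)) (mulPS_scale _ _ _ _ _ _ _ _ _ _ m (hF t) (hG r)).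
  rewrite /dlogZ -/(M k). ring.
have hcurv : curv Om D z f alpha j i r t m = dPS D r (Amat Om z f alpha j i t) m
   - dPS D t (Amat Om z f alpha j i r) m + \sum_k P k by [].
rewrite hcurv hB.
case: hcase => [hlen | [hQ hV]].
  have hfg : f g m = 0 by apply: (hi g hg); exact: leq_trans hm hlen.
  rewrite hfg (D0 (hA r)) (D0 (hA t)) !mulr0 subrr mulr0 add0r.
  apply: big1 => k _; case: (boolP ((k != i) && (k != j))) => hk; last exact: hP0.
  case/andP: hk => hki hkj; rewrite hPk //.
  have -> : M k = 0.
    rewrite /M; apply: (mulPS_inSp _ _ _ _ _ _ (hi _ (hbe0 k hkj)) (hi _ (hde0 k hki))).
    apply: (leq_trans hm); apply: (leq_trans hlen).
    have -> : alpha j - alpha i = be k + de k by rewrite /be /de addrA subrK.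
    exact: len_tri.
  by rewrite mulr0 mul0r.
pose E (s : 'I_n) (b : 'rV[int]_n) : H :=
  if (b != 0) && (g - b != 0)
  then cf H Om b (g - b) * mulPS (f b) (f (g - b)) m * dlogZ z b s else 0.
pose T s k := if (k != i) && (k != j) then E s (be k) + E s (de k) else 0.
have hE0 : forall s b, (forall k, k != i -> k != j -> b != be k /\ b != de k) -> E s b = 0.
  move=> s b hb; rewrite /E; case: ifP => // /andP[hb0 hc0].
  have hv := hV b (g - b) hb0 hc0.
  have h1 : b + (g - b) = alpha j - alpha i by rewrite addrC subrK.
  have h0 : (pairing Om b (g - b))%:~R * mulPS (f b) (f (g - b)) m = 0.
    apply: (hv h1 _ m hm).
    move=> [k [hki hkj [[e1 _]|[e1 _]]]]; have := hb k hki hkj; rewrite e1 eqxx; by case.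
  by rewrite /cf -(mulrA (sgn H _)) h0 mulr0 mul0r.
have hEbox : forall s b,
    \sum_(x : {ffun 'I_n -> 'I_(2 * mdeg m).+1}) ((boxvec x == b)%:R * E s b) = E s b.
  move=> s b; case: (leqP (len b) (mdeg m)) => hl.
    have [x0 hx0] := box_surj _ _ _ hl.
    rewrite (bigD1 x0) //= hx0 eqxx mul1r big1 ?addr0 // => x hx.
    by rewrite -hx0 (inj_eq (@boxvec_inj _ _)) (negPf hx) mul0r.
  have -> : E s b = 0.
    rewrite /E; case: ifP => // /andP[hb0 _].
    have -> : mulPS (f b) (f (g - b)) m = 0.
      apply: (mulPS_inSp _ _ _ _ (len b) 0 (hi _ hb0)) => //; last by rewrite addn0.
    by rewrite mulr0 mul0r.
  by rewrite big1 // => x _; rewrite mulr0.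
have hEdec : forall s b, E s b = \sum_k (if (k != i) && (k != j)
     then (b == be k)%:R * E s (be k) + (b == de k)%:R * E s (de k) else 0).
  move=> s b.
  case: (classic (exists k, [/\ k != i, k != j & (b = be k \/ b = de k)])).
    case=> k0 [h0i h0j eb].
    rewrite (bigD1 k0) //= h0i h0j /= big1 ?addr0.
      case: eb => ->; rewrite eqxx mul1r.
        by rewrite (negPf (hcross _ _ h0j h0j)) mul0r addr0.
      by rewrite eq_sym (negPf (hcross _ _ h0j h0j)) mul0r add0r.
    move=> k hk; case: ifP => // /andP[hki hkj].
    have hb1 : (b == be k) = false.
      apply/negP => /eqP e; case: eb => e'; rewrite e' in e.
        by move/hbeinj: e => e; rewrite e eqxx in hk.
      by move: (hcross _ _ hkj h0j); rewrite e eqxx.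
    have hb2 : (b == de k) = false.
      apply/negP => /eqP e; case: eb => e'; rewrite e' in e.
        by move: (hcross _ _ h0j hkj); rewrite e eqxx.
      by move/hdeinj: e => e; rewrite e eqxx in hk.
    by rewrite hb1 hb2 !mul0r addr0.
  move=> hn; rewrite hE0; last first.
    move=> k hki hkj; split; apply/negP => /eqP e; apply: hn; exists k; split => //; by [left|right].
  rewrite big1 // => k _; case: ifP => // /andP[hki hkj].
  have -> : (b == be k) = false by apply/negP => /eqP e; apply: hn; exists k; split => //; left.
  have -> : (b == de k) = false by apply/negP => /eqP e; apply: hn; exists k; split => //; right.
  by rewrite !mul0r addr0.
have hJ : forall s, D s (f g m) = - \sum_k T s k.
  move=> s; rewrite hiii //; rewrite /joyce_rhs; congr (- _).
  transitivity (\sum_(x : {ffun 'I_n -> 'I_(2 * mdeg m).+1}) E s (boxvec x)); first by [].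
  under eq_bigr => x _ do rewrite (hEdec s (boxvec x)).
  rewrite exchange_big /=; apply: eq_bigr => k _; rewrite /T.
  case: ifP => _; last by rewrite big1.
  by rewrite big_split /= !hEbox.
have hC' : forall k, G * P k = C * ((g ord0 t)%:~R * T r k - (g ord0 r)%:~R * T t k).
  move=> k; case: (boolP ((k != i) && (k != j))) => hk; last first.
    by rewrite hP0 // /T (negPf hk) !mulr0 subrr mulr0.
  case/andP: hk => hki hkj; rewrite hPk // /T hki hkj /=.
  have hgk : g = be k + de k by rewrite /g /be /de addrA subrK.
  have hGk : G = Zc z (be k) + Zc z (de k) by rewrite /G hgk ZcD.
  rewrite /E !hgbe !hgde (hbe0 k hkj) (hde0 k hki) /=.
  rewrite (mulPS_C _ _ (f (de k)) (f (be k)) m) (cf_swap H hO (be k) (de k)).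
  have hgs : forall s, (g ord0 s)%:~R = (be k ord0 s)%:~R + (de k ord0 s)%:~R :> H.
    by move=> s; rewrite hgk mxE intrD.
  rewrite (cfQ H _ _ hO _ _ _ (hQ k hki hkj)) -/C hGk !hgs /dlogZ -/(M k).
  case: (eqVneq (M k) 0) => hMk; first by rewrite hMk; ring.
  have hu1 : Zc z (be k) \is a GRing.unit by apply: hii (hbe0 k hkj) _; exact: mulPS_nzl hMk.
  have hu2 : Zc z (de k) \is a GRing.unit by apply: hii (hde0 k hki) _; exact: mulPS_nzr hMk.
  have e1 := mulrV hu1; have e2 := mulrV hu2.
  move: e1 e2; set Zb := Zc z (be k); set Zd := Zc z (de k); set Wb := Zb^-1; set Wd := Zd^-1.
  set cbd := cf H Om (be k) (de k); set Mk := M k.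
  set br := (be k ord0 r)%:~R; set bt := (be k ord0 t)%:~R.
  set dr := (de k ord0 r)%:~R; set dt := (de k ord0 t)%:~R => e1 e2.
  apply/eqP; rewrite -subr_eq0; apply/eqP.
  transitivity ((Zb * Wb - 1) * (C * cbd * Mk * (br * dt - bt * dr) * Wd)
              + (Zd * Wd - 1) * (C * cbd * Mk * (br * dt - bt * dr) * Wb)); first ring.
  by rewrite e1 e2 !subrr !mul0r addr0.
have hGnz : G != 0 by exact: (Zc_nz _ _ _ _ hch hA hM hz _ hg).
set X := (X in X = 0).
have hGX : G * X = 0.
  rewrite /X mulrDr mulr_sumr (eq_bigr _ (fun k _ => hC' k)) -mulr_sumr sumrB -!mulr_sumr.
  rewrite !hJ.
  set Sr := \sum_k T r k; set St := \sum_k T t k.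
  case: (boolP (G \is a GRing.unit)) => hGu.
    transitivity (C * ((g ord0 t)%:~R * Sr - (g ord0 r)%:~R * St) * (1 - G * W)); first ring.
    by rewrite /W mulrV // subrr mulr0.
  have hf0 : f g m = 0.
    case: (eqVneq (f g m) 0) => // hne; case/negP: hGu; apply: hii => //; by exists m.
  have h0 : forall s, \sum_k T s k = 0.
    by move=> s; apply: oppr_inj; rewrite -hJ hf0 (D0 (hA s)) oppr0.
  by rewrite /Sr /St !h0; ring.
by move/eqP: hGX; rewrite mulf_eq0 (negPf hGnz) /= => /eqP.
Qed.
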